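(* Let $y$ be an integer with $M(0,y)\neq\emptyset$. Then every minimal graph in $M(0,y)$ is nonseparable.
   Context: All graphs are finite, simple and undirected; the empty graph is allowed, with $\chi=\mathrm{cl}=0$. $\mathrm{cl}(G)$ is the clique number, $\chi(G)$ the chromatic number, and $f(G)=\chi(G)-\mathrm{cl}(G)$. For integers $x,y$, $M(x,y)=\{G: |V(G)|<\chi(G)+2f(G)-x \text{ and } f(G)\le y\}$. A graph $G_0$ in a nonempty set $\mathcal M$ of graphs is minimal in $\mathcal M$ if $|V(G_0)|=\min\{|V(G)|:G\in\mathcal M\}$. For vertex-disjoint graphs $G_1,G_2$, the join $G_1+G_2$ has vertex set $V(G_1)\cup V(G_2)$ and edges those of $G_1$, those of $G_2$, and all pairs $\{u,v\}$ with $u\in V(G_1)$, $v\in V(G_2)$. $G$ is separable if $G=G_1+G_2$ with both $V(G_1),V(G_2)$ nonempty; otherwise nonseparable. *)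

(* Defs.v *)
From mathcomp Require Import all_boot all_order all_algebra.
Set Implicit Arguments. Unset Strict Implicit. Unset Printing Implicit Defensive.
Import GRing.Theory Num.Theory.

Record graph := Graph {
  vert : finType;
  adj : rel vert;
  adj_sym : symmetric adj;
  adj_irr : irreflexive adj }.

Definition nv (G : graph) : nat := #|vert G|.

Definition colorable (G : graph) (k : nat) : bool :=
  [exists c : {ffun vert G -> 'I_k},
     [forall x, forall y, adj x y ==> (c x != c y)]].

Lemma colorable_nv (G : graph) : exists k, colorable G k.
Proof.
exists #|vert G|; apply/existsP; exists [ffun x => enum_rank x].
apply/forallP => x; apply/forallP => y; apply/implyP => hxy.
rewrite !ffunE; apply/negP => /eqP /enum_rank_inj exy.
by move: hxy; rewrite exy adj_irr.
Qed.

Definition chi (G : graph) : nat := ex_minn (@colorable_nv G).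

Definition is_clique (G : graph) (S : {set vert G}) : bool :=
  [forall x in S, forall y in S, (x != y) ==> adj x y].

Definition cl (G : graph) : nat :=
  \max_(S : {set vert G} | is_clique S) #|S|.

Definition fG (G : graph) : int := (chi G)%:Z - (cl G)%:Z.

Definition inM (x y : int) (G : graph) : Prop :=
  ((nv G)%:Z < (chi G)%:Z + 2 * fG G - x)%R /\ (fG G <= y)%R.

(* G = G1 + G2 with both parts nonempty: a bipartition (A, complement of A)
   of the vertex set into nonempty parts with every cross pair adjacent
   (G1, G2 are then the induced subgraphs on A and its complement). *)
Definition separable (G : graph) : Prop :=
  exists A : {set vert G},
    A != set0 /\ ~: A != set0 /\
    (forall u v, u \in A -> v \notin A -> adj u v).

(* Main.v *)
Require Import Defs.
From mathcomp Require Import all_boot all_order all_algebra.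
Set Implicit Arguments. Unset Strict Implicit. Unset Printing Implicit Defensive.
Import GRing.Theory Num.Theory.

Lemma chi_min (G : graph) k : colorable G k -> chi G <= k.
Proof. rewrite /chi; case: ex_minnP => m _ H; exact: H. Qed.

Lemma chi_col (G : graph) : colorable G (chi G).
Proof. rewrite /chi; by case: ex_minnP. Qed.

Lemma cl_ge (G : graph) (S : {set vert G}) : is_clique S -> #|S| <= cl G.
Proof. move=> h; rewrite /cl; exact: (leq_bigmax_cond S h). Qed.

Lemma cl_ex (G : graph) : exists S : {set vert G}, is_clique S /\ #|S| = cl G.
Proof.
have h0 : is_clique (set0 : {set vert G}).
  by apply/forallP => x; apply/implyP; rewrite inE.
rewrite /cl (bigmax_eq_arg _ h0).
case: arg_maxnP => //= S hS _; by exists S.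
Qed.

Lemma col_of (G : graph) (T : finType) (c : vert G -> T) :
  (forall x y, adj x y -> c x != c y) -> colorable G #|T|.
Proof.
move=> hc; apply/existsP; exists [ffun x => enum_rank (c x)].
apply/forallP => x; apply/forallP => y; apply/implyP => hxy.
rewrite !ffunE; apply/negP => /eqP /enum_rank_inj e.
by move: (hc _ _ hxy); rewrite e eqxx.
Qed.

Lemma cl_le_chi (G : graph) : cl G <= chi G.
Proof.
have [S [hS <-]] := cl_ex G.
have /existsP [c /forallP hc] := chi_col G.
have inj : {in S &, injective c}.
  move=> x y xS yS e; apply/eqP; apply/negPn/negP => nxy.
  have := forallP (implyP (forallP hS x) xS) y.
  rewrite yS nxy /= => hxy.
  by move: (implyP (forallP (hc x) y) hxy); rewrite e eqxx.
rewrite -(card_in_imset inj).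
by apply: leq_trans (max_card _) _; rewrite card_ord.
Qed.

Section Sub.
Variable G : graph.

Definition sadj (A : {set vert G}) : rel {x : vert G | x \in A} :=
  fun u v => adj (val u) (val v).
Lemma sadj_sym A : symmetric (sadj (A:=A)).
Proof. by move=> u v; rewrite /sadj adj_sym. Qed.
Lemma sadj_irr A : irreflexive (sadj (A:=A)).
Proof. by move=> u; rewrite /sadj adj_irr. Qed.
Definition sub (A : {set vert G}) : graph := Graph (@sadj_sym A) (@sadj_irr A).

Lemma nv_sub A : nv (sub A) = #|A|.
Proof. by rewrite /nv /= card_sig. Qed.

Variable A : {set vert G}.
Hypothesis cross : forall u v, u \in A -> v \notin A -> adj u v.

Lemma cross' u v : u \in A -> v \in ~: A -> adj u v.
Proof. by move=> h; rewrite inE; apply: cross. Qed.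

Definition glue (R : Type) (f : {x | x \in A} -> R) (g : {x | x \in ~: A} -> R)
  (x : vert G) : R :=
  (if x \in A as b return (x \in A) = b -> R then fun h => f (exist _ x h)
   else fun h => g (exist _ x (etrans (in_setC x A) (congr1 negb h)))) (erefl _).

Lemma glueP R f g (P : R -> Prop) x :
  (forall h : x \in A, P (f (exist _ x h))) ->
  (forall h : x \in ~: A, P (g (exist _ x h))) -> P (@glue R f g x).
Proof.
move=> hf hg; rewrite /glue.
suff: forall b (e : (x \in A) = b),
  P ((if b as b0 return (x \in A) = b0 -> R then fun h => f (exist _ x h)
   else fun h => g (exist _ x (etrans (in_setC x A) (congr1 negb h)))) e) by apply.
by case=> e; [apply: hf | apply: hg].
Qed.
End Sub.

Section Join.
Variable G : graph.
Variable A : {set vert G}.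
Hypothesis cross : forall u v, u \in A -> v \notin A -> adj u v.

Lemma adjC u v : u \in A -> v \in ~: A -> adj u v /\ adj v u.
Proof. move=> hu; rewrite inE => hv; have h := cross hu hv; split => //; by rewrite adj_sym. Qed.

Lemma J1 : chi G <= chi (sub A) + chi (sub (~: A)).
Proof.
have /existsP [c1 /forallP h1] := chi_col (sub A).
have /existsP [c2 /forallP h2] := chi_col (sub (~: A)).
set k1 := chi (sub A); set k2 := chi (sub (~: A)).
pose c := glue (fun u => lshift k2 (c1 u)) (fun v => rshift k1 (c2 v)).
rewrite -[k1 + k2](card_ord (k1 + k2)); apply: chi_min; apply: (@col_of _ _ c) => x y hxy.
apply: (glueP (P := fun a => a != c y)) => hx;
apply: (glueP (P := fun b => _ != b)) => hy.
- have := (implyP (forallP (h1 (exist _ x hx)) (exist _ y hy)) hxy).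
  apply: contra => /eqP e; apply/eqP/val_inj; exact: (congr1 val e).
- by rewrite -val_eqE /= neq_ltn (leq_trans (ltn_ord _) (leq_addr _ _)).
- by rewrite -val_eqE /= neq_ltn (leq_trans (ltn_ord _) (leq_addr _ _)) orbT.
- have := (implyP (forallP (h2 (exist _ x hx)) (exist _ y hy)) hxy).
  apply: contra => /eqP e; apply/eqP/val_inj; move: (congr1 val e) => /= /eqP.
  by rewrite eqn_add2l => /eqP.
Qed.

Lemma J3 : chi (sub A) + chi (sub (~: A)) <= chi G.
Proof.
have /existsP [c /forallP hc] := chi_col G.
set C1 := c @: A; set C2 := c @: ~: A.
have prop x y : adj x y -> c x != c y := fun h => implyP (forallP (hc x) y) h.
have e1 : chi (sub A) <= #|C1|.
  rewrite -card_sig; apply: chi_min.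
  apply: (@col_of (sub A) _ (fun u => exist (fun z => z \in C1) (c (val u)) (imset_f c (valP u)))).
  move=> u v huv; apply: contra (prop _ _ huv) => /eqP e; apply/eqP; exact: (congr1 val e).
have e2 : chi (sub (~: A)) <= #|C2|.
  rewrite -card_sig; apply: chi_min.
  apply: (@col_of (sub (~: A)) _ (fun u => exist (fun z => z \in C2) (c (val u)) (imset_f c (valP u)))).
  move=> u v huv; apply: contra (prop _ _ huv) => /eqP e; apply/eqP; exact: (congr1 val e).
have dj : C1 :&: C2 = set0.
  apply/setP => z; rewrite !inE; apply/negP => /andP [/imsetP [u hu ->] /imsetP [v hv]].
  by apply/eqP; apply: prop; case: (adjC hu hv).
apply: leq_trans (leq_add e1 e2) _.
have := cardsU C1 C2; rewrite dj cards0 subn0 => <-.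
by apply: leq_trans (max_card _) _; rewrite card_ord.
Qed.

Lemma clique_val (B : {set vert G}) (S : {set vert (sub B)}) :
  is_clique S -> is_clique ((val : vert (sub B) -> vert G) @: S).
Proof.
move=> hS; apply/forallP => x; apply/implyP => /imsetP [u hu ->].
apply/forallP => y; apply/implyP => /imsetP [v hv ->]; apply/implyP => nuv.
have := implyP (forallP (implyP (forallP hS u) hu) v) hv.
have nuv' : u != v by apply: contra nuv => /eqP ->.
by rewrite nuv'.
Qed.

Lemma J2 : cl (sub A) + cl (sub (~: A)) <= cl G.
Proof.
have [S1 [h1 <-]] := cl_ex (sub A).
have [S2 [h2 <-]] := cl_ex (sub (~: A)).
set T1 := (val : vert (sub A) -> vert G) @: S1.
set T2 := (val : vert (sub (~: A)) -> vert G) @: S2.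
have c1 : #|T1| = #|S1| by apply: card_imset; apply: val_inj.
have c2 : #|T2| = #|S2| by apply: card_imset; apply: val_inj.
have dj : T1 :&: T2 = set0.
  apply/setP => z; rewrite !inE; apply/negP => /andP [/imsetP [u _ ->] /imsetP [v _ e]].
  by move: (valP u) (valP v); rewrite -e inE => ->.
have hT1 := clique_val h1; have hT2 := clique_val h2.
have : is_clique (T1 :|: T2).
  apply/forallP => x; apply/implyP; rewrite inE => hx.
  apply/forallP => y; apply/implyP; rewrite inE => hy; apply/implyP => nxy.
  case/orP: hx => hx; case/orP: hy => hy.
  - by have := implyP (forallP (implyP (forallP hT1 x) hx) y) hy; rewrite nxy.
  - case/imsetP: hx => u _ ->; case/imsetP: hy => v _ ->.
    by case: (adjC (valP u) (valP v)).
  - case/imsetP: hx => u _ ->; case/imsetP: hy => v _ ->.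
    by case: (adjC (valP v) (valP u)).
  - by have := implyP (forallP (implyP (forallP hT2 x) hx) y) hy; rewrite nxy.
move/cl_ge; rewrite cardsU dj cards0 subn0 c1 c2; exact.
Qed.

Lemma J4 : cl G <= cl (sub A) + cl (sub (~: A)).
Proof.
have [S [hS <-]] := cl_ex G.
have part (B : {set vert G}) : #|S :&: B| <= cl (sub B).
  set U := [set u : vert (sub B) | val u \in S].
  have -> : S :&: B = (val : vert (sub B) -> vert G) @: U.
    apply/setP => z; rewrite inE; apply/andP/imsetP.
      by case=> zS zB; exists (exist _ z zB); rewrite // inE.
    by case=> u; rewrite inE => uS ->; split => //; apply: valP.
  rewrite card_imset; last exact: val_inj.
  apply: cl_ge; apply/forallP => x; apply/implyP; rewrite inE => hx.
  apply/forallP => y; apply/implyP; rewrite inE => hy; apply/implyP => nxy.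
  have := implyP (forallP (implyP (forallP hS (val x)) hx) (val y)) hy.
  have nxy' : val x != val y by apply: contra nxy => /eqP /val_inj ->.
  by rewrite nxy'.
rewrite -(cardsID A S) setDE; exact: leq_add (part A) (part (~: A)).
Qed.
End Join.
Import Order.TTheory.

Lemma inM_nat (y : int) (G : graph) :
  inM 0 y G <-> (nv G + 2 * cl G < 3 * chi G)%N /\ ((chi G)%:Z - (cl G)%:Z <= y)%R.
Proof.
rewrite /inM /fG subr0.
have -> : ((nv G)%:Z < (chi G)%:Z + 2 * ((chi G)%:Z - (cl G)%:Z))%R =
          (nv G + 2 * cl G < 3 * chi G)%N.
  rewrite -ltz_nat PoszD !PoszM mulrBr addrA ltrBrDr.
  by rewrite (_ : 3%Z = 1 + 2) // mulrDl mul1r.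
by [].
Qed.

Theorem lemma4p1 (y : int) :
  (exists G : graph, inM 0 y G) ->
  forall G0 : graph,
    inM 0 y G0 ->
    (forall G : graph, inM 0 y G -> nv G0 <= nv G) ->
    ~ separable G0.
Proof.
move=> _ G0 hM hmin [A [nA [nC cross]]].
have hchi : chi G0 = chi (sub A) + chi (sub (~: A)).
  by apply/anti_leq; rewrite J1 // J3.
have hcl : cl G0 = cl (sub A) + cl (sub (~: A)).
  by apply/anti_leq; rewrite J4 // J2.
have hn : nv G0 = nv (sub A) + nv (sub (~: A)).
  by rewrite !nv_sub cardsC.
have p1 : 0 < nv (sub A) by rewrite nv_sub card_gt0.
have p2 : 0 < nv (sub (~: A)) by rewrite nv_sub card_gt0.
have l1 := cl_le_chi (sub A); have l2 := cl_le_chi (sub (~: A)).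
move/inM_nat: hM => [h1 h2].
rewrite hchi hcl hn mulnDr mulnDr addnACA in h1.
rewrite hchi hcl !PoszD opprD addrACA in h2.
case: (ltnP (nv (sub A) + 2 * cl (sub A)) (3 * chi (sub A))) => a.
  have : inM 0 y (sub A).
    apply/inM_nat; split => //; apply: le_trans h2.
    by rewrite lerDl subr_ge0 lez_nat.
  move/hmin; rewrite hn -{2}(addn0 (nv (sub A))) leq_add2l leqNgt p2.
  by [].
have b : nv (sub (~: A)) + 2 * cl (sub (~: A)) < 3 * chi (sub (~: A)).
  rewrite ltnNge; apply/negP => b.
  by move: h1; rewrite ltnNge (leq_add a b).
have : inM 0 y (sub (~: A)).
  apply/inM_nat; split => //; apply: le_trans h2.
  by rewrite lerDr subr_ge0 lez_nat.
move/hmin; rewrite hn -{2}(add0n (nv (sub (~: A)))) leq_add2r leqNgt p1.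
by [].
Qed.
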